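(* Let $n\ge 1$ and let the braid group $B_{n+1}$, with standard generators $\sigma_1,\dotsc,\sigma_n$, act on $(\mathbb{C}/\pi\mathbb{Z})^{n+1}$ by \[ \sigma_i:\ \phi_i\mapsto 2\phi_i-\phi_{i+1},\qquad \phi_{i+1}\mapsto\phi_i,\qquad \phi_j\mapsto\phi_j\ (j\ne i,i+1). \] Then the orbit of a point $(\phi_1,\dotsc,\phi_{n+1})\in(\mathbb{C}/\pi\mathbb{Z})^{n+1}$ under this action is finite if and only if $\phi_i-\phi_{i+1}\in\pi\mathbb{Q}$ (modulo $\pi\mathbb{Z}$) for every $i=1,\dotsc,n$.
   Context: The formulas have integer coefficients, so they are well defined on $(\mathbb{C}/\pi\mathbb{Z})^{n+1}$; the condition $\phi_i-\phi_{i+1}\in\pi\mathbb{Q}$ means that some (equivalently every) representative of $\phi_i-\phi_{i+1}\in\mathbb{C}/\pi\mathbb{Z}$ lies in $\pi\mathbb{Q}$. *)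

(* Defs.v *)
From HB Require Import structures.
From mathcomp Require Import all_boot all_order all_algebra.
From mathcomp Require Import complex.
From mathcomp Require Import reals trigo.
Set Implicit Arguments. Unset Strict Implicit. Unset Printing Implicit Defensive.
Import Order.TTheory GRing.Theory Num.Theory.
Local Open Scope ring_scope.
Local Open Scope complex_scope.

(* A point of C^(n+1), indices 0..n (paper's phi_1..phi_{n+1} shifted by one). *)
Definition pt (R : realType) (n : nat) := 'I_n.+1 -> R[i].

Definition eqmodpi (R : realType) (n : nat) (phi psi : pt R n) : Prop :=
  forall j : 'I_n.+1, exists z : int, phi j - psi j = (pi : R)%:C * z%:~R.

(* The generator sigma_{i+1} (i : 'I_n, 0-based):
   phi_i |-> 2 phi_i - phi_{i+1},  phi_{i+1} |-> phi_i, others fixed. *)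
Definition sigma (R : realType) (n : nat) (i : 'I_n) (phi : pt R n) : pt R n :=
  fun j => if val j == val i then 2 * phi (inord i) - phi (inord i.+1)
           else if val j == i.+1 then phi (inord i)
           else phi j.

Definition sigma_inv (R : realType) (n : nat) (i : 'I_n) (phi : pt R n) : pt R n :=
  fun j => if val j == val i then phi (inord i.+1)
           else if val j == i.+1 then 2 * phi (inord i.+1) - phi (inord i)
           else phi j.

(* psi lies in the braid-group orbit of (the class of) phi: psi is obtained
   from phi by a finite word in the generators sigma_i and their inverses,
   up to equality mod pi Z. *)
Inductive braid_reach (R : realType) (n : nat) (phi : pt R n) : pt R n -> Prop :=
  | br_refl : braid_reach phi phi
  | br_sigma : forall (i : 'I_n) psi, braid_reach phi psi -> braid_reach phi (sigma i psi)
  | br_sigma_inv : forall (i : 'I_n) psi, braid_reach phi psi -> braid_reach phi (sigma_inv i psi).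

(* The orbit of the class of phi in (C/pi Z)^(n+1) is finite: it is covered by
   the classes of finitely many points. *)
Definition finite_orbit (R : realType) (n : nat) (phi : pt R n) : Prop :=
  exists (m : nat) (f : 'I_m -> pt R n),
    forall psi, braid_reach phi psi -> exists k : 'I_m, eqmodpi psi (f k).

(* Main.v *)
Require Import Defs.
From HB Require Import structures.
From mathcomp Require Import all_boot all_order all_algebra.
From mathcomp Require Import complex.
From mathcomp Require Import reals trigo.
From mathcomp Require Import ring.
From Stdlib Require Import Classical.
Import Order.TTheory GRing.Theory Num.Theory.
Local Open Scope ring_scope.
Local Open Scope complex_scope.

Section Aux.
Variables (R : realType) (n : nat).

Lemma val_inord_i (i : 'I_n) : val (inord i : 'I_n.+1) = i.
Proof. by rewrite /= inordK // ltnS ltnW. Qed.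

Lemma val_inord_i1 (i : 'I_n) : val (inord i.+1 : 'I_n.+1) = i.+1.
Proof. by rewrite /= inordK // ltnS. Qed.

Lemma sigma_i (i : 'I_n) (psi : pt R n) :
  sigma i psi (inord i) = 2 * psi (inord i) - psi (inord i.+1).
Proof. by rewrite /sigma val_inord_i eqxx. Qed.

Lemma sigma_i1 (i : 'I_n) (psi : pt R n) :
  sigma i psi (inord i.+1) = psi (inord i).
Proof.
rewrite /sigma val_inord_i1 eqxx.
by have -> : (i.+1 == i) = false by elim: (nat_of_ord i) => //.
Qed.

Lemma iter_sigma (i : 'I_n) (phi : pt R n) (k : nat) :
  iter k (sigma i) phi (inord i) =
    phi (inord i) + k%:R * (phi (inord i) - phi (inord i.+1)) /\
  iter k (sigma i) phi (inord i.+1) =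
    phi (inord i.+1) + k%:R * (phi (inord i) - phi (inord i.+1)).
Proof.
elim: k => [|k [IH1 IH2]] /=; first by split; ring.
rewrite sigma_i sigma_i1 IH1 IH2; split; ring.
Qed.

Lemma reach_iter (i : 'I_n) (phi : pt R n) (k : nat) :
  braid_reach phi (iter k (sigma i) phi).
Proof. elim: k => [|k IH] /=; [exact: br_refl | exact: br_sigma]. Qed.

End Aux.

Theorem mainTheorem2 (R : realType) (n : nat) (hn : (1 <= n)%N) (phi : pt R n) :
  finite_orbit phi <->
  (forall i : 'I_n, exists q : rat,
      phi (inord i) - phi (inord i.+1) = (pi : R)%:C * (ratr q)).
Proof.
split.
- move=> [m [f Hf]] i.
  have H1 : forall k : 'I_m.+1, exists c : 'I_m,
      eqmodpi (iter k (sigma i) phi) (f c).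
    by move=> k; apply: Hf; apply: reach_iter.
  have [g Hg] := fin_all_exists H1.
  have [k1 [k2 [Hne Heq]]] : exists k1 k2 : 'I_m.+1, k1 <> k2 /\ g k1 = g k2.
    apply: NNPP => Hn.
    have Hinj : injective g.
      move=> x y Hxy; apply: NNPP => Hxy'; apply: Hn; by exists x, y.
    by have := leq_card g Hinj; rewrite !card_ord ltnn.
  have [z1 E1] := Hg k1 (inord i.+1).
  have [z2 E2] := Hg k2 (inord i.+1).
  rewrite Heq in E1.
  have [_ I1] := @iter_sigma R n i phi k1.
  have [_ I2] := @iter_sigma R n i phi k2.
  rewrite I1 in E1; rewrite I2 in E2.
  exists ((z1 - z2)%:~R / ((k1 : nat)%:Z - (k2 : nat)%:Z)%:~R).
  have Hne' : (((k1 : nat)%:Z - (k2 : nat)%:Z)%:~R : R[i]) != 0.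
    rewrite intr_eq0 subr_eq0; apply/negP => /eqP [] Hk.
    by apply: Hne; apply: val_inj.
  rewrite fmorph_div /= !ratr_int.
  apply: (mulIf Hne'); rewrite mulrA divfK //.
  rewrite !intrB mulrBr.
  idtac.
  rewrite (mulrBr (pi%:C)) -E1 -E2 !pmulrn; ring.
- move=> Hq.
  have [q Hq'] := fin_all_exists Hq.
  pose N : int := \prod_(i < n) denq (q i).
  have HN : 0 < N by apply: prodr_gt0 => i _; apply: denq_gt0.
  have HNC : (N%:~R : R[i]) != 0 by rewrite intr_eq0 gt_eqF.
  pose c (i : 'I_n) : int := numq (q i) * \prod_(j < n | j != i) denq (q j).
  have Hc : forall i : 'I_n, phi (inord i.+1) =
      phi (inord i) - (pi : R)%:C * ((c i)%:~R / N%:~R).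
    move=> i.
    have HP : 0 < \prod_(j < n | j != i) denq (q j)
      by apply: prodr_gt0 => j _; apply: denq_gt0.
    have HPC : ((\prod_(j < n | j != i) denq (q j))%:~R : R[i]) != 0
      by rewrite intr_eq0 gt_eqF.
    have HDC : ((denq (q i))%:~R : R[i]) != 0 by rewrite intr_eq0 denq_neq0.
    have -> : (c i)%:~R / N%:~R = ratr (q i) :> R[i].
      rewrite /c /N [in X in _ / X](bigD1 i) //= /ratr !intrM.
      field. by rewrite HDC HPC.
    rewrite -Hq'; ring.
  pose Inv (psi : pt R n) := forall j, exists z : int,
      psi j - phi j = (pi : R)%:C * (z%:~R / N%:~R).
  have Hinv : forall psi, braid_reach phi psi -> Inv psi.
    move=> psi; elim => [|i ps _ IH|i ps _ IH].
    + by move=> j; exists 0; rewrite subrr mul0r mulr0.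
    + have [zi Ei] := IH (inord i); have [zi1 Ei1] := IH (inord i.+1).
      have Ei' : ps (inord i) = phi (inord i) + (pi : R)%:C * (zi%:~R / N%:~R)
        by rewrite -Ei; ring.
      have Ei1' : ps (inord i.+1) = phi (inord i.+1) + (pi : R)%:C * (zi1%:~R / N%:~R)
        by rewrite -Ei1; ring.
      move=> j; rewrite /sigma.
      case: ifP => Hj1.
        have -> : j = inord i by apply/val_inj; rewrite val_inord_i (eqP Hj1).
        exists (zi + zi - zi1 + c i).
        rewrite Ei' Ei1' Hc !(intrD, intrN). field. exact: HNC.
      case: ifP => Hj2; last exact: IH.
      have -> : j = inord i.+1 by apply/val_inj; rewrite val_inord_i1 (eqP Hj2).
      exists (zi + c i).
      rewrite Ei' Hc !(intrD, intrN). field. exact: HNC.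
    + have [zi Ei] := IH (inord i); have [zi1 Ei1] := IH (inord i.+1).
      have Ei' : ps (inord i) = phi (inord i) + (pi : R)%:C * (zi%:~R / N%:~R)
        by rewrite -Ei; ring.
      have Ei1' : ps (inord i.+1) = phi (inord i.+1) + (pi : R)%:C * (zi1%:~R / N%:~R)
        by rewrite -Ei1; ring.
      move=> j; rewrite /sigma_inv.
      case: ifP => Hj1.
        have -> : j = inord i by apply/val_inj; rewrite val_inord_i (eqP Hj1).
        exists (zi1 - c i).
        rewrite Ei1' Hc !(intrD, intrN). field. exact: HNC.
      case: ifP => Hj2; last exact: IH.
      have -> : j = inord i.+1 by apply/val_inj; rewrite val_inord_i1 (eqP Hj2).
      exists (zi1 + zi1 - zi - c i).
      rewrite Ei' Ei1' Hc !(intrD, intrN). field. exact: HNC.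
  pose Nn := `|N|%N.
  have NE : N = Nn%:Z by rewrite /Nn gez0_abs // ltW.
  pose T := {ffun 'I_n.+1 -> 'I_Nn}.
  exists #|T|, (fun k j => phi j + (pi : R)%:C * (((enum_val (k : 'I_#|T|) : T) j : nat)%:R / N%:~R)).
  move=> psi /Hinv HI.
  have [zf Hz] := fin_all_exists HI.
  have HN0 : N != 0 by rewrite gt_eqF.
  have Hlt : forall j, (`|(zf j %% N)%Z| < Nn)%N.
    move=> j; rewrite -ltz_nat gez0_abs ?modz_ge0 // -/Nn -NE.
    exact: ltz_pmod.
  pose g : T := [ffun j => Ordinal (Hlt j)].
  exists (enum_rank g) => j.
  rewrite enum_rankK ffunE /=.
  exists (zf j %/ N)%Z.
  have Hr : ((`|(zf j %% N)%Z|%N)%:R : R[i]) = ((zf j %% N)%Z)%:~R.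
    by rewrite -[in RHS](gez0_abs (modz_ge0 _ HN0)) pmulrn.
  have Ez : psi j = phi j + (pi : R)%:C * ((zf j)%:~R / N%:~R)
    by rewrite -Hz; ring.
  rewrite Ez Hr {1}(divz_eq (zf j) N) intrD intrM.
  field. exact: HNC.
Qed.
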